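(* Let $\mathcal{M}$ be an $n$-abelian category and consider a commutative diagram in $\mathcal{M}$ with rows $X^0\xrightarrow{d_X^0}X^1\xrightarrow{d_X^1}X^2\xrightarrow{d_X^2}X^3\xrightarrow{d_X^3}X^4$ and $Y^0\xrightarrow{d_Y^0}Y^1\xrightarrow{d_Y^1}Y^2\xrightarrow{d_Y^2}Y^3\xrightarrow{d_Y^3}Y^4$ and vertical morphisms $f^i:X^i\to Y^i$ ($0\le i\le4$). Suppose $f^1$ and $f^3$ are isomorphisms, $f^0$ is an epimorphism, $f^4$ is a monomorphism, and one of the following holds: (i) for $i=1,2,3$, $d_X^i$ is a weak cokernel of $d_X^{i-1}$ and $d_Y^i$ is a weak cokernel of $d_Y^{i-1}$; or (ii) for $i=0,1,2$, $d_X^i$ is a weak kernel of $d_X^{i+1}$ and $d_Y^i$ is a weak kernel of $d_Y^{i+1}$. Then $f^2$ is an isomorphism.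
   Context: A weak cokernel of $f:A\to B$ is a morphism $g:B\to C$ such that $\mathcal{M}(C,W)\to\mathcal{M}(B,W)\to\mathcal{M}(A,W)$ is exact for all $W$; a weak kernel of $g:B\to C$ is a morphism $f:A\to B$ such that $\mathcal{M}(W,A)\to\mathcal{M}(W,B)\to\mathcal{M}(W,C)$ is exact for all $W$. An $n$-abelian category is an idempotent complete additive category in which every morphism has an $n$-kernel and an $n$-cokernel, and in which every monomorphism (resp. epimorphism) together with any of its $n$-cokernels (resp. $n$-kernels) forms an $n$-exact sequence (here $n$-kernel/$n$-cokernel and $n$-exact are in the sense of Jasso: $X^0\to\cdots\to X^{n+1}$ is $n$-exact if $0\to\mathcal{M}(X^{n+1},W)\to\cdots\to\mathcal{M}(X^0,W)$ and $0\to\mathcal{M}(W,X^0)\to\cdots\to\mathcal{M}(W,X^{n+1})$ are exact for all $W$). *)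

(* Defs.v *)
From HB Require Import structures.
From mathcomp Require Import all_boot all_order all_algebra.
Set Implicit Arguments. Unset Strict Implicit. Unset Printing Implicit Defensive.
Import GRing.Theory.
Local Open Scope ring_scope.

Record PreaddCat := {
  Obj : Type;
  Mor : Obj -> Obj -> zmodType;
  idm : forall a, Mor a a;
  cmp : forall a b c, Mor b c -> Mor a b -> Mor a c;
  cmpA : forall a b c d (h : Mor c d) (g : Mor b c) (f : Mor a b),
      cmp h (cmp g f) = cmp (cmp h g) f;
  cmp1m : forall a b (f : Mor a b), cmp (idm b) f = f;
  cmpm1 : forall a b (f : Mor a b), cmp f (idm a) = f;
  cmpDl : forall a b c (g g' : Mor b c) (f : Mor a b),
      cmp (g + g') f = cmp g f + cmp g' f;
  cmpDr : forall a b c (g : Mor b c) (f f' : Mor a b),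
      cmp g (f + f') = cmp g f + cmp g f'
}.

Arguments idm {p} a.
Arguments cmp {p a b c} g f.
Arguments Mor {p} a b.

Unset Implicit Arguments.
Section CatDefs.
Context {C : PreaddCat}.

Definition is_mono {a b : Obj C} (f : Mor a b) :=
  forall w (x y : Mor w a), cmp f x = cmp f y -> x = y.
Definition is_epi {a b : Obj C} (f : Mor a b) :=
  forall w (x y : Mor b w), cmp x f = cmp y f -> x = y.
Definition is_iso {a b : Obj C} (f : Mor a b) :=
  exists g : Mor b a, cmp g f = idm a /\ cmp f g = idm b.

Definition has_zero_object :=
  exists z : Obj C, (forall x (f : Mor z x), f = 0) /\ (forall x (f : Mor x z), f = 0).
Definition has_biproducts :=
  forall a b : Obj C, exists (p : Obj C) (i1 : Mor a p) (i2 : Mor b p)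
    (p1 : Mor p a) (p2 : Mor p b),
    [/\ cmp p1 i1 = idm a, cmp p2 i2 = idm b, cmp p1 i2 = 0, cmp p2 i1 = 0
      & cmp i1 p1 + cmp i2 p2 = idm p].
Definition is_additive := has_zero_object /\ has_biproducts.

Definition idempotent_complete :=
  forall x (e : Mor x x), cmp e e = e ->
    exists (y : Obj C) (p : Mor x y) (s : Mor y x), cmp s p = e /\ cmp p s = idm y.

Definition weak_cokernel {a b c : Obj C} (g : Mor b c) (f : Mor a b) :=
  forall w (x : Mor b w), cmp x f = 0 <-> exists y : Mor c w, x = cmp y g.
Definition weak_kernel {a b c : Obj C} (f : Mor a b) (g : Mor b c) :=
  forall w (x : Mor w b), cmp g x = 0 <-> exists y : Mor w a, x = cmp f y.

(* Sequences X^0 -> X^1 -> ... indexed by nat; only the first n+2 terms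
   (X^0..X^{n+1}, maps d^0..d^n) are used. *)
(* exactness of  M(X^{i+2},W) -> M(X^{i+1},W) -> M(X^i,W) *)
Definition contra_exact_at (X : nat -> Obj C) (d : forall i, Mor (X i) (X i.+1)) i :=
  forall w (x : Mor (X i.+1) w), cmp x (d i) = 0 <->
    exists y : Mor (X i.+2) w, x = cmp y (d i.+1).
(* exactness of  M(W,X^i) -> M(W,X^{i+1}) -> M(W,X^{i+2}) *)
Definition co_exact_at (X : nat -> Obj C) (d : forall i, Mor (X i) (X i.+1)) i :=
  forall w (x : Mor w (X i.+1)), cmp (d i.+1) x = 0 <->
    exists y : Mor w (X i), x = cmp (d i) y.

(* (d^0,...,d^{n-1}) is an n-kernel of d^n (Jasso):
   0 -> M(W,X^0) -> ... -> M(W,X^n) -> M(W,X^{n+1}) exact *)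
Definition is_nkernel_seq (n : nat) (X : nat -> Obj C) (d : forall i, Mor (X i) (X i.+1)) :=
  is_mono (d 0%N) /\ forall i, (i < n)%N -> co_exact_at X d i.
(* (d^1,...,d^n) is an n-cokernel of d^0 (Jasso):
   0 -> M(X^{n+1},W) -> ... -> M(X^1,W) -> M(X^0,W) exact *)
Definition is_ncokernel_seq (n : nat) (X : nat -> Obj C) (d : forall i, Mor (X i) (X i.+1)) :=
  is_epi (d n) /\ forall i, (i < n)%N -> contra_exact_at X d i.
Definition is_nexact (n : nat) (X : nat -> Obj C) (d : forall i, Mor (X i) (X i.+1)) := is_nkernel_seq n X d /\ is_ncokernel_seq n X d.

Definition castHom {a b a' b' : Obj C} (ea : a = a') (eb : b = b') (f : Mor a b)
  : Mor a' b' := match ea, eb with erefl, erefl => f end.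

Definition has_nkernel (n : nat) {A B : Obj C} (f : Mor A B) :=
  exists (X : nat -> Obj C) (d : forall i, Mor (X i) (X i.+1))
    (eA : X n = A) (eB : X n.+1 = B),
    castHom eA eB (d n) = f /\ is_nkernel_seq n X d.
Definition has_ncokernel (n : nat) {A B : Obj C} (f : Mor A B) :=
  exists (X : nat -> Obj C) (d : forall i, Mor (X i) (X i.+1))
    (eA : X 0%N = A) (eB : X 1%N = B),
    castHom eA eB (d 0%N) = f /\ is_ncokernel_seq n X d.

Definition n_abelian (n : nat) :=
  [/\ (0 < n)%N, is_additive /\ idempotent_complete,
      (forall A B (f : Mor A B), has_nkernel n f /\ has_ncokernel n f),
      (forall (X : nat -> Obj C) (d : forall i, Mor (X i) (X i.+1)), is_mono (d 0%N) -> is_ncokernel_seq n X d -> is_nexact n X d)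
    & (forall (X : nat -> Obj C) (d : forall i, Mor (X i) (X i.+1)), is_epi (d n) -> is_nkernel_seq n X d -> is_nexact n X d)].

End CatDefs.

(* Main.v *)
Require Import Defs.
From HB Require Import structures.
From mathcomp Require Import all_boot all_order all_algebra.
Import GRing.Theory.
Local Open Scope ring_scope.

Section Aux.
Variable C : PreaddCat.

Lemma cmp0r (a b c : Obj C) (g : Mor b c) : cmp g (0 : Mor a b) = 0.
Proof. by apply/eqP; rewrite -(subr_eq0 _ 0) subr0; apply/eqP/(@addrI _ (cmp g (0 : Mor a b))); rewrite -cmpDr !addr0. Qed.
Lemma cmp0l (a b c : Obj C) (f : Mor a b) : cmp (0 : Mor b c) f = 0.
Proof. by apply/(@addrI _ (cmp (0 : Mor b c) f)); rewrite -cmpDl !addr0. Qed.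
Lemma cmpNl (a b c : Obj C) (g : Mor b c) (f : Mor a b) : cmp (- g) f = - cmp g f.
Proof. by apply/eqP; rewrite -subr_eq0 opprK -cmpDl addNr cmp0l. Qed.
Lemma cmpBl (a b c : Obj C) (g g' : Mor b c) (f : Mor a b) : cmp (g - g') f = cmp g f - cmp g' f.
Proof. by rewrite cmpDl cmpNl. Qed.
Lemma cmpNr (a b c : Obj C) (g : Mor b c) (f : Mor a b) : cmp g (- f) = - cmp g f.
Proof. by apply/eqP; rewrite -subr_eq0 opprK -cmpDr addNr cmp0r. Qed.
Lemma cmpBr (a b c : Obj C) (g : Mor b c) (f f' : Mor a b) : cmp g (f - f') = cmp g f - cmp g f'.
Proof. by rewrite cmpDr cmpNr. Qed.

Lemma five_cok
  (X0 X1 X2 X3 X4 Y0 Y1 Y2 Y3 Y4 : Obj C)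
  (dX0 : Mor X0 X1) (dX1 : Mor X1 X2) (dX2 : Mor X2 X3) (dX3 : Mor X3 X4)
  (dY0 : Mor Y0 Y1) (dY1 : Mor Y1 Y2) (dY2 : Mor Y2 Y3) (dY3 : Mor Y3 Y4)
  (f0 : Mor X0 Y0) (f1 : Mor X1 Y1) (f2 : Mor X2 Y2) (f3 : Mor X3 Y3) (f4 : Mor X4 Y4)
  (c0 : cmp f1 dX0 = cmp dY0 f0) (c1 : cmp f2 dX1 = cmp dY1 f1)
  (c2 : cmp f3 dX2 = cmp dY2 f2) (c3 : cmp f4 dX3 = cmp dY3 f3)
  (iso1 : is_iso f1) (iso3 : is_iso f3) (epi0 : is_epi f0) (mono4 : is_mono f4)
  (h1 : weak_cokernel dX1 dX0) (h2 : weak_cokernel dX2 dX1) (h3 : weak_cokernel dX3 dX2)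
  (k1 : weak_cokernel dY1 dY0) (k2 : weak_cokernel dY2 dY1) (k3 : weak_cokernel dY3 dY2) :
  is_iso f2.
Proof.
have [i1 [i1a i1b]] := iso1; have [i3 [i3a i3b]] := iso3.
have eX10 : cmp dX1 dX0 = 0 by apply/(h1 _ dX1); exists (idm _); rewrite cmp1m.
have Hd : cmp (cmp (cmp (idm X2) dX1) i1) dY0 = 0.
  apply: epi0; rewrite cmp0l -cmpA -c0 cmpA -(cmpA _ i1) i1a cmpm1 cmp1m eX10 //.
have [c' Hc'] := (k1 _ _).1 Hd.
have Hb : cmp (idm X2 - cmp c' f2) dX1 = 0.
  rewrite cmpBl -cmpA c1 cmpA -Hc' -cmpA i1a cmpm1 subrr //.
have [b Hb'] := (h2 _ _).1 Hb.
pose g := c' + cmp (cmp b i3) dY2.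
have gf : cmp g f2 = idm X2.
  rewrite /g cmpDl -!cmpA -c2 (cmpA i3) i3a cmp1m -Hb' addrC subrK //.
exists g; split => //.
pose e := idm Y2 - cmp f2 g.
have ef : cmp e f2 = 0 by rewrite cmpBl cmp1m -cmpA gf cmpm1 subrr.
have e1 : cmp e dY1 = 0.
  have : cmp (cmp e dY1) (cmp f1 i1) = 0 by rewrite cmpA -(cmpA e) -c1 cmpA ef cmp0l cmp0l.
  by rewrite i1b cmpm1.
have [y Hy] := (k2 _ _).1 e1.
pose t := cmp i3 (cmp dY2 e).
have eY32 : cmp dY3 dY2 = 0 by apply/(k3 _ dY3); exists (idm _); rewrite cmp1m.
have dt : cmp dX3 t = 0.
  apply: mono4; rewrite cmp0r cmpA c3 -cmpA /t (cmpA f3) i3b cmp1m cmpA eY32 cmp0l //.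
have yf : cmp (cmp y f3) dX2 = 0 by rewrite -cmpA c2 cmpA -Hy ef.
have [z Hz] := (h3 _ _).1 yf.
have ee : cmp e e = e.
  rewrite /e !(cmpBl, cmpBr) cmp1m cmpm1 -!cmpA (cmpA g f2) gf cmp1m.
  by rewrite cmp1m subrr subr0.
have e0 : e = 0.
  rewrite -ee {1}Hy -cmpA.
  have -> : cmp dY2 e = cmp f3 t by rewrite /t cmpA i3b cmp1m.
  by rewrite cmpA Hz -cmpA dt cmp0r.
by apply/eqP; rewrite eq_sym -subr_eq0 -/e e0.
Qed.

Definition opCat : PreaddCat.
refine (@Build_PreaddCat (Obj C) (fun a b => Mor b a) (fun a => idm a)
  (fun a b c g f => cmp f g) _ _ _ _ _).
- by move=> a b c d h g f; rewrite cmpA.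
- by move=> a b f; rewrite cmpm1.
- by move=> a b f; rewrite cmp1m.
- by move=> a b c g g' f; rewrite cmpDr.
- by move=> a b c g f f'; rewrite cmpDl.
Defined.

End Aux.
Arguments five_cok {C X0 X1 X2 X3 X4 Y0 Y1 Y2 Y3 Y4 dX0 dX1 dX2 dX3 dY0 dY1 dY2 dY3 f0 f1 f2 f3 f4}.

Theorem mainTheorem10 (n : nat) (C : PreaddCat) (HC : @n_abelian C n)
  (X0 X1 X2 X3 X4 Y0 Y1 Y2 Y3 Y4 : Obj C)
  (dX0 : Mor X0 X1) (dX1 : Mor X1 X2) (dX2 : Mor X2 X3) (dX3 : Mor X3 X4)
  (dY0 : Mor Y0 Y1) (dY1 : Mor Y1 Y2) (dY2 : Mor Y2 Y3) (dY3 : Mor Y3 Y4)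
  (f0 : Mor X0 Y0) (f1 : Mor X1 Y1) (f2 : Mor X2 Y2) (f3 : Mor X3 Y3) (f4 : Mor X4 Y4)
  (c0 : cmp f1 dX0 = cmp dY0 f0) (c1 : cmp f2 dX1 = cmp dY1 f1)
  (c2 : cmp f3 dX2 = cmp dY2 f2) (c3 : cmp f4 dX3 = cmp dY3 f3)
  (iso1 : is_iso f1) (iso3 : is_iso f3) (epi0 : is_epi f0) (mono4 : is_mono f4)
  (H : (weak_cokernel dX1 dX0 /\ weak_cokernel dX2 dX1 /\ weak_cokernel dX3 dX2 /\
        weak_cokernel dY1 dY0 /\ weak_cokernel dY2 dY1 /\ weak_cokernel dY3 dY2)
    \/ (weak_kernel dX0 dX1 /\ weak_kernel dX1 dX2 /\ weak_kernel dX2 dX3 /\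
        weak_kernel dY0 dY1 /\ weak_kernel dY1 dY2 /\ weak_kernel dY2 dY3)) :
  is_iso f2.
Proof.
case: H => [[h1 [h2 [h3 [k1 [k2 k3]]]]] | [h1 [h2 [h3 [k1 [k2 k3]]]]]].
  exact: (five_cok c0 c1 c2 c3 iso1 iso3 epi0 mono4 h1 h2 h3 k1 k2 k3).
have iso' : forall (a b : Obj C) (f : Mor a b), is_iso f -> @is_iso (opCat C) b a (f : @Mor (opCat C) b a).
  by move=> a b f [g [? ?]]; exists g.
have [g [? ?]] := @five_cok (opCat C) Y4 Y3 Y2 Y1 Y0 X4 X3 X2 X1 X0
  dY3 dY2 dY1 dY0 dX3 dX2 dX1 dX0 f4 f3 f2 f1 f0
  (esym c3) (esym c2) (esym c1) (esym c0) (iso' _ _ _ iso3) (iso' _ _ _ iso1)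
  mono4 epi0 k3 k2 k1 h3 h2 h1.
by exists g.
Qed.
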